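(* Let $\alpha>0$, $A>0$, $k\ge2$ and $a\ge1$. Then \[ \lambda_k(I_{A^{1/2}a},\alpha)+\lambda_1(I_{A^{1/2}/a},\alpha)\ge\lambda_1(Q_{(A/k)^{1/2}},\alpha)=\lambda_k(S_k,\alpha). \]
   Context: For a bounded open set $\Omega\subset\mathbb{R}^d$ ($d=1,2$) with Lipschitz boundary (possibly disconnected) and $\alpha>0$, $\lambda_1(\Omega,\alpha)\le\lambda_2(\Omega,\alpha)\le\cdots$ denote the eigenvalues, counted with multiplicity, of the Robin Laplacian $-\Delta u=\lambda u$, $\partial_\nu u+\alpha u=0$ on $\partial\Omega$ (defined via the form $\int_\Omega\nabla u\cdot\overline{\nabla v}+\alpha\int_{\partial\Omega}u\overline v$ on $H^1(\Omega)$). $I_b$ is an interval of length $b$; $Q_s$ is a square of side length $s$; $S_k$ is the disjoint union of $k$ equal squares of total area $A$. The left-hand side is the eigenvalue of the rectangle with sides $A^{1/2}a$, $A^{1/2}/a$ associated with its $(k,1)$ mode. *)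

(* Defs.v *)
From Stdlib Require Import Reals.
From Coquelicot Require Import Coquelicot.
Open Scope R_scope.

Fixpoint lsum (k : nat) (g : nat -> R) : R :=
  match k with O => 0 | S n => lsum n g + g n end.

Definition lincomb {X : Type} (k : nat) (c : nat -> R) (f : nat -> X -> R)
  : X -> R := fun x => lsum k (fun i => c i * f i x).

Definition nonzero_coeffs (k : nat) (c : nat -> R) : Prop :=
  exists i, (i < k)%nat /\ c i <> 0.

(** Courant--Fischer min-max value: k-th eigenvalue (counted with
    multiplicity) of the self-adjoint operator associated with the
    quadratic form [a] relative to the L^2 mass [m], computed over a core
    [adm] of the form domain:
      lambda_k = inf_{V, dim V = k} sup_{v in V \ 0} a(v)/m(v). *)
Definition minmax {X : Type} (adm : (X -> R) -> Prop)
  (a m : (X -> R) -> R) (k : nat) : Rbar :=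
  Glb_Rbar (fun r => exists f : nat -> X -> R,
     (forall i, (i < k)%nat -> adm (f i)) /\
     (forall c, nonzero_coeffs k c -> 0 < m (lincomb k c f)) /\
     Finite r = Lub_Rbar (fun q => exists c, nonzero_coeffs k c /\
                    q = a (lincomb k c f) / m (lincomb k c f))).

(** C^1 functions on R (restrictions to [0,b] form a core of H^1(0,b)). *)
Definition C1_1d (u : R -> R) : Prop :=
  forall x, ex_derive u x /\ continuous (Derive u) x.

Definition energy_I (alpha b : R) (u : R -> R) : R :=
  RInt (fun x => (Derive u x) ^ 2) 0 b + alpha * (u 0 ^ 2 + u b ^ 2).

Definition mass_I (b : R) (u : R -> R) : R := RInt (fun x => u x ^ 2) 0 b.

Definition robin_eig_interval (alpha b : R) (k : nat) : Rbar :=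
  minmax C1_1d (energy_I alpha b) (mass_I b) k.

Definition dx (u : R * R -> R) (p : R * R) : R :=
  Derive (fun x => u (x, snd p)) (fst p).
Definition dy (u : R * R -> R) (p : R * R) : R :=
  Derive (fun y => u (fst p, y)) (snd p).

(** C^1 functions on R^2 (restrictions form a core of H^1 of a square). *)
Definition C1_2d (u : R * R -> R) : Prop :=
  forall p, ex_derive (fun x => u (x, snd p)) (fst p) /\
            ex_derive (fun y => u (fst p, y)) (snd p) /\
            continuous (dx u) p /\ continuous (dy u) p.

Definition int_sq (s : R) (g : R * R -> R) : R :=
  RInt (fun x => RInt (fun y => g (x, y)) 0 s) 0 s.

Definition energy_Q (alpha s : R) (u : R * R -> R) : R :=
  int_sq s (fun p => dx u p ^ 2 + dy u p ^ 2)
  + alpha * (RInt (fun x => u (x, 0) ^ 2 + u (x, s) ^ 2) 0 s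
             + RInt (fun y => u (0, y) ^ 2 + u (s, y) ^ 2) 0 s).

Definition mass_Q (s : R) (u : R * R -> R) : R := int_sq s (fun p => u p ^ 2).

Definition robin_eig_square (alpha s : R) (k : nat) : Rbar :=
  minmax C1_2d (energy_Q alpha s) (mass_Q s) k.

(** ---------- S_n: disjoint union of n equal squares of total area A ----
   Each square has side sqrt(A/n); a function on S_n is a family of
   functions u(j, .) on the squares j < n. *)
Definition adm_S (n : nat) (u : nat * (R * R) -> R) : Prop :=
  forall j, (j < n)%nat -> C1_2d (fun p => u (j, p)).

Definition energy_S (alpha A : R) (n : nat) (u : nat * (R * R) -> R) : R :=
  lsum n (fun j => energy_Q alpha (sqrt (A / INR n)) (fun p => u (j, p))).

Definition mass_S (A : R) (n : nat) (u : nat * (R * R) -> R) : R :=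
  lsum n (fun j => mass_Q (sqrt (A / INR n)) (fun p => u (j, p))).

Definition robin_eig_squares (alpha A : R) (n k : nat) : Rbar :=
  minmax (adm_S n) (energy_S alpha A n) (mass_S A n) k.

(* Main.v *)
Require Import Defs.
From Stdlib Require Import Reals.
From Coquelicot Require Import Coquelicot.
From Stdlib Require Import Lra Lia FunctionalExtensionality Classical.
Open Scope R_scope.

Ltac toR := match goal with |- @eq _ ?a ?b => change (@eq R a b) end.

Lemma scal_R (k x : R) : scal k x = k * x. Proof. reflexivity. Qed.
Lemma plus_R (k x : R) : plus k x = k + x. Proof. reflexivity. Qed.
Lemma minus_R (k x : R) : minus k x = k - x. Proof. reflexivity. Qed.

Lemma RInt_junk (f : R -> R) a b : ~ ex_RInt f a b -> RInt f a b = 0.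
Proof.
  intros H. unfold RInt, iota. simpl.
  unfold lim. simpl. unfold R_complete_lim.
  rewrite (Lub_Rbar_eqset _ (fun _ => True)).
  - replace (Lub_Rbar (fun _ => True)) with p_infty. reflexivity.
    symmetry. apply is_lub_Rbar_unique. split. intros x _. exact I.
    intros z Hb. destruct z as [z| |]; simpl; auto.
    specialize (Hb (z+1) I). simpl in Hb. lra.
    specialize (Hb 0 I). simpl in Hb. auto.
  - intros x; split; auto. intros _ y Hy. exfalso. apply H. exists y. exact Hy.
Qed.

Lemma RInt_scal_u (f : R -> R) a b l :
  RInt (fun x => l * f x) a b = l * RInt f a b.
Proof.
  destruct (classic (ex_RInt f a b)) as [H|H].
  - exact (@RInt_scal R_CompleteNormedModule f a b l H).
  - rewrite (RInt_junk f a b H).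
    destruct (Req_dec l 0) as [->|Hl].
    + rewrite (RInt_ext _ (fun _ => 0)). rewrite RInt_const. 
      rewrite scal_R. toR. ring.
      intros x _. toR. ring.
    + rewrite RInt_junk. toR; ring. intros H'. apply H.
      apply (@ex_RInt_ext R_NormedModule (fun x => scal (/l) (l * f x))).
      intros x _. rewrite scal_R. toR. field. auto.
      apply (@ex_RInt_scal R_NormedModule). auto.
Qed.

Lemma RInt_ge0_u (f : R -> R) a b :
  a <= b -> (forall x, a < x < b -> 0 <= f x) -> 0 <= RInt f a b.
Proof.
  intros Hab Hf. destruct (classic (ex_RInt f a b)) as [H|H].
  - apply RInt_ge_0; auto.
  - rewrite RInt_junk; auto; lra.
Qed.

Lemma cont_of_pt (f : R -> R) x : continuity_pt f x -> continuous f x.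
Proof. intros H. apply continuity_pt_filterlim. auto. Qed.
Lemma pt_of_cont (f : R -> R) x : continuous f x -> continuity_pt f x.
Proof. intros H. apply continuity_pt_filterlim. auto. Qed.

Lemma ex_RInt_cont (f : R -> R) a b :
  a <= b -> (forall x, a <= x <= b -> continuity_pt f x) -> ex_RInt f a b.
Proof.
  intros Hab H. apply (@ex_RInt_continuous R_CompleteNormedModule). intros z Hz.
  rewrite Rmin_left in Hz by auto. rewrite Rmax_right in Hz by auto.
  apply cont_of_pt. auto.
Qed.

Lemma RInt_plus_R (f g : R -> R) a b :
  ex_RInt f a b -> ex_RInt g a b ->
  RInt (fun x => f x + g x) a b = RInt f a b + RInt g a b.
Proof. intros. exact (@RInt_plus R_CompleteNormedModule f g a b H H0). Qed.

Lemma RInt_minus_R (f g : R -> R) a b :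
  ex_RInt f a b -> ex_RInt g a b ->
  RInt (fun x => f x - g x) a b = RInt f a b - RInt g a b.
Proof. intros. exact (@RInt_minus R_CompleteNormedModule f g a b H H0). Qed.

Lemma lsum_ext n f g : (forall i, (i < n)%nat -> f i = g i) -> lsum n f = lsum n g.
Proof.
  induction n; simpl; intros H; auto.
  rewrite IHn by (intros; apply H; lia). rewrite H by lia. auto.
Qed.
Lemma lsum_plus n f g : lsum n (fun i => f i + g i) = lsum n f + lsum n g.
Proof. induction n; simpl; [ring| rewrite IHn; ring]. Qed.
Lemma lsum_scal n c f : lsum n (fun i => c * f i) = c * lsum n f.
Proof. induction n; simpl; [ring| rewrite IHn; ring]. Qed.
Lemma lsum_zero n : lsum n (fun _ => 0) = 0.
Proof. induction n; simpl; [ring| rewrite IHn; ring]. Qed.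
Lemma lsum_nonneg n f : (forall i, (i<n)%nat -> 0 <= f i) -> 0 <= lsum n f.
Proof. induction n; simpl; intros H; [lra|]. specialize (IHn (fun i Hi => H i ltac:(lia))). specialize (H n ltac:(lia)). lra. Qed.
Lemma lsum_le n f g : (forall i, (i<n)%nat -> f i <= g i) -> lsum n f <= lsum n g.
Proof. induction n; simpl; intros H; [lra|]. specialize (IHn (fun i Hi => H i ltac:(lia))). specialize (H n ltac:(lia)). lra. Qed.
Lemma lsum_sq_pos n c : nonzero_coeffs n c -> 0 < lsum n (fun i => c i ^ 2).
Proof.
  induction n; cbn [lsum]; intros [i [Hi Hc]]; [lia|].
  destruct (Nat.eq_dec i n) as [->|Hne].
  - assert (0 <= lsum n (fun i => c i ^ 2)) by (apply lsum_nonneg; intros; nra).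
    assert (0 < c n * c n) by (apply (Rsqr_pos_lt (c n)); auto). replace (c n ^ 2) with (c n * c n) by ring. lra.
  - assert (0 < lsum n (fun i => c i ^ 2)) by (apply IHn; exists i; split; [lia|auto]).
    assert (0 <= c n ^ 2) by apply pow2_ge_0. lra.
Qed.
Lemma lsum_delta n i (g : nat -> R) : (i < n)%nat ->
  lsum n (fun j => (if Nat.eqb j i then 1 else 0) * g j) = g i.
Proof.
  induction n; simpl; intros H; [lia|].
  destruct (Nat.eq_dec i n) as [->|Hne].
  - rewrite Nat.eqb_refl. rewrite (lsum_ext _ _ (fun _ => 0)). rewrite lsum_zero. ring.
    intros j Hj. destruct (Nat.eqb_spec j n); [lia|ring].
  - rewrite IHn by lia. destruct (Nat.eqb_spec n i); [lia|ring].
Qed.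

Lemma linsolve : forall n m (A : nat -> nat -> R), (m < n)%nat ->
  exists c, nonzero_coeffs n c /\
    forall i, (i < m)%nat -> lsum n (fun j => c j * A i j) = 0.
Proof.
  induction n as [|n IH]; intros m A Hmn; [lia|].
  destruct m as [|m].
  - exists (fun j => if Nat.eqb j 0 then 1 else 0). split.
    + exists 0%nat. split; [lia|]. simpl. lra.
    + intros; lia.
  - destruct (classic (exists i0, (i0 < S m)%nat /\ A i0 n <> 0)) as [[i0 [Hi0 Ha]]|Hno].
    + set (sk := fun i' => if Nat.ltb i' i0 then i' else S i').
      set (B := fun i' j => A (sk i') j - (A (sk i') n / A i0 n) * A i0 j).
      destruct (IH m B ltac:(lia)) as [c' [Hnz Hc']].
      set (S0 := lsum n (fun j => c' j * A i0 j)).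
      exists (fun j => if Nat.ltb j n then c' j else if Nat.eqb j n then - S0 / A i0 n else 0).
      split.
      * destruct Hnz as [j0 [Hj0 Hc0]]. exists j0. split; [lia|].
        destruct (Nat.ltb_spec j0 n); [auto|lia].
      * intros i Hi. cbn [lsum].
        rewrite (lsum_ext _ _ (fun j => c' j * A i j)).
        2:{ intros j Hj. destruct (Nat.ltb_spec j n); [auto|lia]. }
        rewrite Nat.ltb_irrefl, Nat.eqb_refl.
        destruct (Nat.eq_dec i i0) as [->|Hne].
        -- fold S0. field. auto.
        -- set (i' := if Nat.ltb i i0 then i else pred i).
           assert (Hsk : sk i' = i).
           { unfold sk, i'. destruct (Nat.ltb_spec i i0).
             - destruct (Nat.ltb_spec i i0); lia.
             - destruct (Nat.ltb_spec (pred i) i0); lia. }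
           assert (Hi' : (i' < m)%nat).
           { unfold i'. destruct (Nat.ltb_spec i i0); lia. }
           specialize (Hc' i' Hi'). unfold B in Hc'. rewrite Hsk in Hc'.
           rewrite (lsum_ext _ _ (fun j => c' j * A i j + (- (A i n / A i0 n)) * (c' j * A i0 j))) in Hc'
             by (intros; ring).
           rewrite lsum_plus, lsum_scal in Hc'. fold S0 in Hc'.
           assert (E : lsum n (fun j => c' j * A i j) = A i n / A i0 n * S0) by lra.
           rewrite E. field. auto.
    + exists (fun j => if Nat.eqb j n then 1 else 0). split.
      * exists n. split; [lia|]. rewrite Nat.eqb_refl. lra.
      * intros i Hi. cbn [lsum]. rewrite Nat.eqb_refl.
        rewrite (lsum_ext _ _ (fun _ => 0)). rewrite lsum_zero.
        assert (A i n = 0). { apply NNPP. intros H. apply Hno. exists i. auto. }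
        rewrite H. ring.
        intros j Hj. destruct (Nat.eqb_spec j n); [lia|ring].
Qed.

Lemma C1_plus u v : C1_1d u -> C1_1d v -> C1_1d (fun x => u x + v x).
Proof.
  intros Hu Hv x. destruct (Hu x) as [Hu1 _]. destruct (Hv x) as [Hv1 _]. split.
  - exact (@ex_derive_plus R_AbsRing R_NormedModule u v x Hu1 Hv1).
  - assert (E : Derive (fun x => u x + v x) = fun x => Derive u x + Derive v x).
    { apply functional_extensionality. intros y.
      apply Derive_plus; [apply Hu | apply Hv]. }
    rewrite E. apply cont_of_pt. apply continuity_pt_plus; apply pt_of_cont; [apply Hu|apply Hv].
Qed.

Lemma C1_scal c u : C1_1d u -> C1_1d (fun x => c * u x).
Proof.
  intros Hu x. split.
  - apply ex_derive_scal. apply Hu.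
  - assert (E : Derive (fun x => c * u x) = fun x => c * Derive u x).
    { apply functional_extensionality. intros y. apply Derive_scal. }
    rewrite E. apply cont_of_pt. apply continuity_pt_mult.
    apply continuity_pt_const. intros a b; auto. apply pt_of_cont; apply Hu.
Qed.

Lemma C1_const c : C1_1d (fun _ => c).
Proof.
  intros x. split. apply (@ex_derive_const R_AbsRing R_NormedModule).
  assert (E : Derive (fun _ : R => c) = fun _ => 0).
  { apply functional_extensionality. intros y. apply Derive_const. }
  rewrite E. apply cont_of_pt. apply continuity_pt_const. intros a b; auto.
Qed.

Lemma C1_lincomb k c f : (forall i, (i < k)%nat -> C1_1d (f i)) -> C1_1d (lincomb k c f).
Proof.
  induction k; intros H.
  - apply C1_const.
  - change (C1_1d (fun x => lincomb k c f x + c k * f k x)).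
    apply C1_plus. apply IHk. intros; apply H; lia. apply C1_scal. apply H. lia.
Qed.

Lemma C1_cont u x : C1_1d u -> continuity_pt u x.
Proof. intros H. apply pt_of_cont. apply (@ex_derive_continuous R_AbsRing R_NormedModule). apply H. Qed.
Lemma C1_dcont u x : C1_1d u -> continuity_pt (Derive u) x.
Proof. intros H. apply pt_of_cont. apply H. Qed.

Lemma riccati (u g dg : R -> R) (nu x0 x1 : R) :
  x0 <= x1 -> C1_1d u ->
  (forall x, x0 <= x <= x1 -> is_derive g x (dg x)) ->
  (forall x, x0 <= x <= x1 -> continuity_pt dg x) ->
  (forall x, x0 <= x <= x1 -> dg x = - nu - g x ^ 2) ->
  RInt (fun x => Derive u x ^ 2) x0 x1 - nu * RInt (fun x => u x ^ 2) x0 x1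
   - (g x1 * u x1 ^ 2 - g x0 * u x0 ^ 2)
  = RInt (fun x => (Derive u x - g x * u x) ^ 2) x0 x1.
Proof.
  intros H01 Hu Hg Hdg Hric.
  assert (Hgc : forall x, x0 <= x <= x1 -> continuity_pt g x).
  { intros x Hx. apply pt_of_cont. apply (@ex_derive_continuous R_AbsRing R_NormedModule).
    exists (dg x). apply Hg; auto. }
  set (dh := fun x => dg x * u x ^ 2 + g x * (INR 2 * Derive u x * u x ^ 1)).
  assert (Hh : is_RInt dh x0 x1 (g x1 * u x1 ^ 2 - g x0 * u x0 ^ 2)).
  { apply (@is_RInt_derive R_CompleteNormedModule (fun x => g x * u x ^ 2) dh).
    - intros x Hx. rewrite Rmin_left, Rmax_right in Hx by auto.
      apply Derive.is_derive_mult. apply Hg; auto. apply is_derive_pow.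
      apply Derive_correct. apply Hu.
    - intros x Hx. rewrite Rmin_left, Rmax_right in Hx by auto.
      apply cont_of_pt. unfold dh.
      apply continuity_pt_plus. apply continuity_pt_mult. apply Hdg; auto.
      apply continuity_pt_mult. apply C1_cont; auto. apply continuity_pt_mult.
      apply C1_cont; auto. apply continuity_pt_const; intros a b; auto.
      apply continuity_pt_mult. apply Hgc; auto.
      apply continuity_pt_mult. apply continuity_pt_mult. apply continuity_pt_const; intros a b; auto.
      apply C1_dcont; auto. apply continuity_pt_mult. apply C1_cont; auto.
      apply continuity_pt_const; intros a b; auto. }
  assert (Ea : ex_RInt (fun x => Derive u x ^ 2) x0 x1).
  { apply ex_RInt_cont; auto. intros x Hx. apply continuity_pt_mult. apply C1_dcont; auto.
    apply continuity_pt_mult. apply C1_dcont; auto. apply continuity_pt_const; intros a b; auto. }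
  assert (Eb : ex_RInt (fun x => u x ^ 2) x0 x1).
  { apply ex_RInt_cont; auto. intros x Hx. apply continuity_pt_mult. apply C1_cont; auto.
    apply continuity_pt_mult. apply C1_cont; auto. apply continuity_pt_const; intros a b; auto. }
  assert (Ec : ex_RInt (fun x => nu * u x ^ 2) x0 x1).
  { apply (@ex_RInt_ext R_NormedModule (fun x => scal nu (u x ^ 2))). intros; reflexivity.
    apply (@ex_RInt_scal R_NormedModule). auto. }
  rewrite (RInt_ext (fun x => (Derive u x - g x * u x) ^ 2) (fun x => (Derive u x ^ 2 - nu * u x ^ 2) - dh x)).
  2:{ intros x Hx. rewrite Rmin_left, Rmax_right in Hx by auto. unfold dh.
      toR. rewrite Hric by lra. simpl. ring. }
  rewrite RInt_minus_R.
  rewrite RInt_minus_R by auto. rewrite RInt_scal_u.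
  rewrite (is_RInt_unique _ _ _ _ Hh). reflexivity.
  apply (@ex_RInt_minus R_NormedModule); auto.
  exists (g x1 * u x1 ^ 2 - g x0 * u x0 ^ 2). auto.
Qed.

Lemma cos_pos_in z th : 0 <= th < PI/2 -> -th <= z <= th -> 0 < cos z.
Proof. intros. apply cos_gt_0; lra. Qed.

Definition gfun (r c x : R) := - r * (sin (r * (x - c)) / cos (r * (x - c))).

Lemma interval_ident (alpha b t a0 : R) (u : R -> R) :
  0 < alpha -> 0 < b -> 0 < t -> t * atan t = alpha * b / 2 -> C1_1d u ->
  RInt (fun x => Derive u x ^ 2) a0 (a0 + b) + alpha * (u a0 ^ 2 + u (a0 + b) ^ 2)
  - (alpha / t) ^ 2 * RInt (fun x => u x ^ 2) a0 (a0 + b)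
  = RInt (fun x => (Derive u x - gfun (alpha / t) (a0 + b / 2) x * u x) ^ 2) a0 (a0 + b).
Proof.
  intros Ha Hb Ht Hth Hu.
  set (r := alpha / t). set (c := a0 + b / 2). set (th := atan t).
  assert (Hr : 0 < r) by (unfold r; apply Rdiv_lt_0_compat; auto).
  assert (Hthb : 0 < th < PI / 2).
  { unfold th. split. rewrite <- atan_0. apply atan_increasing; auto.
    destruct (atan_bound t); lra. }
  assert (Hrb : r * (b / 2) = th).
  { unfold r. apply (Rmult_eq_reg_l t); [|lra]. field_simplify; [|lra].
    fold th in Hth. lra. }
  assert (Hcos : forall x, a0 <= x <= a0 + b -> 0 < cos (r * (x - c))).
  { intros x Hx. apply (cos_pos_in _ th). lra.
    assert (-(b/2) <= x - c) by (unfold c; lra). assert (x - c <= b/2) by (unfold c; lra).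
    split.
    - assert (r * (-(b/2)) <= r * (x - c)) by (apply Rmult_le_compat_l; lra). lra.
    - assert (r * (x - c) <= r * (b/2)) by (apply Rmult_le_compat_l; lra). lra. }
  set (g := gfun r c). unfold gfun in g.
  set (dg := fun x => - r * r - g x ^ 2).
  assert (Hg : forall x, a0 <= x <= a0 + b -> is_derive g x (dg x)).
  { intros x Hx. specialize (Hcos x Hx). unfold g, dg, g. auto_derive.
    all: replace (x + - c) with (x - c) by ring. lra. field. lra. }

  pose proof (riccati u g dg (r * r) a0 (a0 + b) ltac:(lra) Hu Hg) as HR.
  rewrite <- HR.
  - assert (Hcth : 0 < cos th) by (apply cos_gt_0; lra).
    assert (Htan : sin th / cos th = t) by (unfold th; apply atan_right_inv).
    assert (Eg0 : g a0 = alpha).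
    { unfold g. replace (r * (a0 - c)) with (- th) by (unfold c; lra).
      rewrite sin_neg, cos_neg.
      replace (- sin th / cos th) with (-(sin th / cos th)) by (field; lra).
      rewrite Htan. unfold r. field. lra. }
    assert (Eg1 : g (a0 + b) = - alpha).
    { unfold g. replace (r * (a0 + b - c)) with th by (unfold c; lra).
      rewrite Htan. unfold r. field. lra. }
    rewrite Eg0, Eg1. replace ((alpha / t) ^ 2) with (r * r) by (unfold r; ring). ring.
  - intros x Hx.
    assert (Hgc : continuity_pt g x).
    { apply pt_of_cont. apply (@ex_derive_continuous R_AbsRing R_NormedModule).
      exists (dg x). apply Hg; auto. }
    unfold dg. apply continuity_pt_minus. apply continuity_pt_const; intros a1 b1; auto.
    apply (continuity_pt_ext (fun x => g x * g x)). intros; ring.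
    apply continuity_pt_mult; auto.
  - intros x Hx. unfold dg. ring.
Qed.

Lemma interval_bound (alpha b t a0 : R) (u : R -> R) :
  0 < alpha -> 0 < b -> 0 < t -> t * atan t = alpha * b / 2 -> C1_1d u ->
  (alpha / t) ^ 2 * RInt (fun x => u x ^ 2) a0 (a0 + b)
  <= RInt (fun x => Derive u x ^ 2) a0 (a0 + b) + alpha * (u a0 ^ 2 + u (a0 + b) ^ 2).
Proof.
  intros Ha Hb Ht Hth Hu.
  pose proof (interval_ident alpha b t a0 u Ha Hb Ht Hth Hu) as HI.
  assert (0 <= RInt (fun x => (Derive u x - gfun (alpha / t) (a0 + b / 2) x * u x) ^ 2) a0 (a0 + b)).
  { apply RInt_ge0_u. lra. intros; apply pow2_ge_0. }
  lra.
Qed.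

Lemma ex_RInt_sq u a b : a <= b -> C1_1d u -> ex_RInt (fun x => u x ^ 2) a b.
Proof.
  intros Hab Hu. apply ex_RInt_cont; auto. intros x Hx. apply continuity_pt_mult. apply C1_cont; auto.
  apply continuity_pt_mult. apply C1_cont; auto. apply continuity_pt_const; intros a1 b1; auto.
Qed.
Lemma ex_RInt_dsq u a b : a <= b -> C1_1d u -> ex_RInt (fun x => Derive u x ^ 2) a b.
Proof.
  intros Hab Hu. apply ex_RInt_cont; auto. intros x Hx. apply continuity_pt_mult. apply C1_dcont; auto.
  apply continuity_pt_mult. apply C1_dcont; auto. apply continuity_pt_const; intros a1 b1; auto.
Qed.

Lemma chasles_R (f : R -> R) a b c : ex_RInt f a b -> ex_RInt f b c ->
  RInt f a c = RInt f a b + RInt f b c.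
Proof. intros H1 H2. symmetry. exact (@RInt_Chasles R_CompleteNormedModule f a b c H1 H2). Qed.

Lemma chain_bound alpha b t u n :
  0 < alpha -> 0 < b -> 0 < t -> t * atan t = alpha * b / 2 -> C1_1d u -> (1 <= n)%nat ->
  (forall i, (1 <= i < n)%nat -> u (INR i * b) = 0) ->
  (alpha / t) ^ 2 * RInt (fun x => u x ^ 2) 0 (INR n * b)
  <= RInt (fun x => Derive u x ^ 2) 0 (INR n * b) + alpha * (u 0 ^ 2 + u (INR n * b) ^ 2).
Proof.
  intros Ha Hb Ht Hth Hu Hn Hz. induction n as [|n IH]; [lia|].
  destruct (Nat.eq_dec n 0) as [->|Hn0].
  - replace (INR 1 * b) with (0 + b) by (simpl; ring).
    apply interval_bound; auto.
  - assert (IH' := IH ltac:(lia) (fun i Hi => Hz i ltac:(lia))).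
    assert (Hzn : u (INR n * b) = 0) by (apply Hz; lia).
    assert (HnB : 0 <= INR n * b) by (apply Rmult_le_pos; [apply pos_INR|lra]).
    replace (INR (S n) * b) with (INR n * b + b) by (rewrite S_INR; ring).
    pose proof (interval_bound alpha b t (INR n * b) u Ha Hb Ht Hth Hu) as HI.
    rewrite (chasles_R _ 0 (INR n * b)) by (apply ex_RInt_sq; auto; lra).
    rewrite (chasles_R (fun x => Derive u x ^ 2) 0 (INR n * b)) by (apply ex_RInt_dsq; auto; lra).
    rewrite Hzn in IH', HI. simpl in IH', HI |- *. nra.
Qed.

Lemma t_exists beta : 0 < beta -> exists t, 0 < t /\ t * atan t = beta.
Proof.
  intros Hb.
  assert (Ha1 : 0 < atan 1) by (rewrite <- atan_0; apply atan_increasing; lra).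
  set (T := 1 + beta / atan 1).
  assert (HT : 1 < T) by (unfold T; assert (0 < beta / atan 1) by (apply Rdiv_lt_0_compat; auto); lra).
  assert (HaT : atan 1 < atan T) by (apply atan_increasing; lra).
  destruct (IVT (fun t => t * atan t - beta) 0 T) as [z [Hz Hfz]].
  - intros x. apply continuity_pt_minus. apply continuity_pt_mult.
    apply derivable_continuous_pt; apply derivable_pt_id.
    apply derivable_continuous_pt. apply derivable_pt_atan.
    apply continuity_pt_const; intros a1 b1; auto.
  - lra.
  - rewrite atan_0. lra.
  - assert (T * atan 1 = atan 1 + beta) by (unfold T; field; lra). nra.
  - exists z. split; [|lra]. destruct (Rle_lt_or_eq_dec 0 z) as [H|H]; [lra|auto|].
    subst. rewrite atan_0 in Hfz. lra.
Qed.

Lemma glb_ge (S : R -> Prop) (m : R) : (forall r, S r -> m <= r) -> Rbar_le m (Glb_Rbar S).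
Proof.
  intros H. destruct (Glb_Rbar_correct S) as [_ H2]. apply H2. intros r Hr. simpl. apply H; auto.
Qed.
Lemma glb_le (S : R -> Prop) (r : R) : S r -> Rbar_le (Glb_Rbar S) r.
Proof. intros H. destruct (Glb_Rbar_correct S) as [H1 _]. apply H1; auto. Qed.
Lemma lub_ge (S : R -> Prop) (q : R) : S q -> Rbar_le q (Lub_Rbar S).
Proof. intros H. destruct (Lub_Rbar_correct S) as [H1 _]. apply H1; auto. Qed.

Lemma eig_interval_lower alpha L k p t :
  0 < alpha -> (1 <= k)%nat -> 0 < p -> L = INR k * p -> 0 < t -> t * atan t = alpha * p / 2 ->
  Rbar_le (Finite ((alpha / t) ^ 2)) (robin_eig_interval alpha L k).
Proof.
  intros Ha Hk Hp HL Ht Hth. unfold robin_eig_interval, minmax.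
  apply glb_ge. intros r [f [Hadm [Hpos Hr]]].
  destruct (linsolve k (k - 1) (fun i j => f j (INR (S i) * p)) ltac:(lia)) as [c [Hnz Hc]].
  set (v := lincomb k c f).
  assert (Hv : C1_1d v) by (apply C1_lincomb; auto).
  assert (Hm : 0 < mass_I L v) by (apply Hpos; auto).
  assert (Hq : Rbar_le (energy_I alpha L v / mass_I L v) r).
  { rewrite Hr. apply lub_ge. exists c. split; auto. }
  simpl in Hq.
  assert (HB : (alpha / t) ^ 2 * mass_I L v <= energy_I alpha L v).
  { unfold mass_I, energy_I. rewrite HL. apply chain_bound; auto.
    intros i Hi. destruct i as [|i']; [lia|]. apply (Hc i'). lia. }
  assert ((alpha / t) ^ 2 <= energy_I alpha L v / mass_I L v).
  { apply (Rmult_le_reg_r (mass_I L v)); auto.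
    replace (energy_I alpha L v / mass_I L v * mass_I L v) with (energy_I alpha L v) by (field; lra). lra. }
  lra.
Qed.

Lemma int_sq_scal s k (G : R * R -> R) :
  int_sq s (fun p => k * G p) = k * int_sq s G.
Proof.
  unfold int_sq. rewrite <- RInt_scal_u. apply RInt_ext. intros x _.
  apply RInt_scal_u.
Qed.

Lemma dx_scal c u p : dx (fun q => c * u q) p = c * dx u p.
Proof. unfold dx. apply Derive_scal. Qed.
Lemma dy_scal c u p : dy (fun q => c * u q) p = c * dy u p.
Proof. unfold dy. apply Derive_scal. Qed.

Lemma energy_Q_scal alpha s c u :
  energy_Q alpha s (fun p => c * u p) = c ^ 2 * energy_Q alpha s u.
Proof.
  unfold energy_Q.
  replace (fun p => dx (fun q => c * u q) p ^ 2 + dy (fun q => c * u q) p ^ 2)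
    with (fun p => c ^ 2 * (dx u p ^ 2 + dy u p ^ 2)).
  2:{ apply functional_extensionality; intros p. rewrite dx_scal, dy_scal. ring. }
  rewrite int_sq_scal.
  replace (fun x => (c * u (x, 0)) ^ 2 + (c * u (x, s)) ^ 2)
    with (fun x => c ^ 2 * (u (x, 0) ^ 2 + u (x, s) ^ 2))
    by (apply functional_extensionality; intros; ring).
  replace (fun y => (c * u (0, y)) ^ 2 + (c * u (s, y)) ^ 2)
    with (fun y => c ^ 2 * (u (0, y) ^ 2 + u (s, y) ^ 2))
    by (apply functional_extensionality; intros; ring).
  rewrite !RInt_scal_u. ring.
Qed.

Lemma mass_Q_scal s c u : mass_Q s (fun p => c * u p) = c ^ 2 * mass_Q s u.
Proof.
  unfold mass_Q.
  replace (fun p => (c * u p) ^ 2) with (fun p => c ^ 2 * (u p ^ 2))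
    by (apply functional_extensionality; intros; ring).
  apply int_sq_scal.
Qed.

Lemma int_sq_ge0 s G : 0 <= s -> (forall p, 0 <= G p) -> 0 <= int_sq s G.
Proof.
  intros Hs HG. unfold int_sq. apply RInt_ge0_u; auto. intros x _.
  apply RInt_ge0_u; auto.
Qed.

Lemma energy_Q_ge0 alpha s u : 0 <= alpha -> 0 <= s -> 0 <= energy_Q alpha s u.
Proof.
  intros Ha Hs. unfold energy_Q.
  assert (0 <= int_sq s (fun p => dx u p ^ 2 + dy u p ^ 2)).
  { apply int_sq_ge0; auto. intros; assert (0 <= dx u p ^ 2) by apply pow2_ge_0;
    assert (0 <= dy u p ^ 2) by apply pow2_ge_0; lra. }
  assert (0 <= RInt (fun x => u (x, 0) ^ 2 + u (x, s) ^ 2) 0 s).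
  { apply RInt_ge0_u; auto. intros x _. assert (0 <= u (x, 0) ^ 2) by apply pow2_ge_0;
    assert (0 <= u (x, s) ^ 2) by apply pow2_ge_0; lra. }
  assert (0 <= RInt (fun y => u (0, y) ^ 2 + u (s, y) ^ 2) 0 s).
  { apply RInt_ge0_u; auto. intros x _. assert (0 <= u (0, x) ^ 2) by apply pow2_ge_0;
    assert (0 <= u (s, x) ^ 2) by apply pow2_ge_0; lra. }
  assert (0 <= alpha * (RInt (fun x => u (x, 0) ^ 2 + u (x, s) ^ 2) 0 s +
                        RInt (fun y => u (0, y) ^ 2 + u (s, y) ^ 2) 0 s)) by (apply Rmult_le_pos; lra).
  lra.
Qed.

Lemma RInt_lin2 (f g : R -> R) a b k l :
  ex_RInt f a b -> ex_RInt g a b ->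
  RInt (fun y => k * f y + l * g y) a b = k * RInt f a b + l * RInt g a b.
Proof.
  intros Hf Hg. rewrite RInt_plus_R. rewrite !RInt_scal_u. auto.
  apply (@ex_RInt_ext R_NormedModule (fun x => scal k (f x))). intros; reflexivity.
  apply (@ex_RInt_scal R_NormedModule). auto.
  apply (@ex_RInt_ext R_NormedModule (fun x => scal l (g x))). intros; reflexivity.
  apply (@ex_RInt_scal R_NormedModule). auto.
Qed.

Lemma dx_prod w p : dx (fun q => w (fst q) * w (snd q)) p = Derive w (fst p) * w (snd p).
Proof.
  unfold dx. simpl. rewrite (Derive_ext _ (fun x => w (snd p) * w x)) by (intros; toR; ring).
  rewrite Derive_scal. ring.
Qed.
Lemma dy_prod w p : dy (fun q => w (fst q) * w (snd q)) p = w (fst p) * Derive w (snd p).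
Proof.
  unfold dy. simpl. apply Derive_scal.
Qed.

Lemma prod_energy (w : R -> R) (Hw : C1_1d w) (s : R) (Hs : 0 <= s) alpha :
  energy_Q alpha s (fun q => w (fst q) * w (snd q))
  = 2 * RInt (fun x => w x ^ 2) 0 s * (RInt (fun x => Derive w x ^ 2) 0 s + alpha * (w 0 ^ 2 + w s ^ 2)).
Proof.
  set (N := RInt (fun x => w x ^ 2) 0 s). set (D := RInt (fun x => Derive w x ^ 2) 0 s).
  unfold energy_Q, int_sq. simpl.
  assert (EN := ex_RInt_sq w 0 s Hs Hw). assert (ED := ex_RInt_dsq w 0 s Hs Hw).
  rewrite (RInt_ext (fun x => RInt (fun y => dx (fun q => w (fst q) * w (snd q)) (x, y) ^ 2 +
        dy (fun q => w (fst q) * w (snd q)) (x, y) ^ 2) 0 s)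
     (fun x => D * (w x ^ 2) + N * (Derive w x ^ 2))).
  2:{ intros x _. rewrite (RInt_ext _ (fun y => (Derive w x ^ 2) * (w y ^ 2) + (w x ^ 2) * (Derive w y ^ 2))).
      rewrite RInt_lin2; auto. fold N D. toR. ring.
      intros y _. rewrite dx_prod, dy_prod. simpl. toR. ring. }
  rewrite RInt_lin2; auto. fold N D.
  rewrite (RInt_ext (fun x => (w x * w 0) ^ 2 + (w x * w s) ^ 2) (fun x => (w 0 ^ 2 + w s ^ 2) * w x ^ 2))
    by (intros; toR; ring).
  rewrite (RInt_ext (fun y => (w 0 * w y) ^ 2 + (w s * w y) ^ 2) (fun x => (w 0 ^ 2 + w s ^ 2) * w x ^ 2))
    by (intros; toR; ring).
  rewrite !RInt_scal_u. fold N. ring.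
Qed.

Lemma prod_mass (w : R -> R) (Hw : C1_1d w) (s : R) (Hs : 0 <= s) :
  mass_Q s (fun q => w (fst q) * w (snd q)) = RInt (fun x => w x ^ 2) 0 s * RInt (fun x => w x ^ 2) 0 s.
Proof.
  set (N := RInt (fun x => w x ^ 2) 0 s).
  unfold mass_Q, int_sq. simpl.
  rewrite (RInt_ext (fun x => RInt (fun y => (w x * w y) ^ 2) 0 s) (fun x => N * w x ^ 2)).
  rewrite RInt_scal_u. fold N. ring.
  intros x _. toR. rewrite (RInt_ext _ (fun y => w x ^ 2 * w y ^ 2)) by (intros; toR; ring).
  rewrite RInt_scal_u. fold N. ring.
Qed.

Lemma cont_prod2 (f g : R -> R) (p : R * R) :
  continuity_pt f (fst p) -> continuity_pt g (snd p) ->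
  continuous (fun q : R * R => f (fst q) * g (snd q)) p.
Proof.
  intros Hf Hg. destruct p as [x y]. simpl in *.
  apply (@continuous_mult (prod_UniformSpace R_UniformSpace R_UniformSpace) R_AbsRing
           (fun q => f (fst q)) (fun q => g (snd q))).
  - apply (@continuous_comp (prod_UniformSpace R_UniformSpace R_UniformSpace) R_UniformSpace R_UniformSpace fst f).
    apply continuous_fst. apply cont_of_pt. auto.
  - apply (@continuous_comp (prod_UniformSpace R_UniformSpace R_UniformSpace) R_UniformSpace R_UniformSpace snd g).
    apply continuous_snd. apply cont_of_pt. auto.
Qed.

Lemma prod_C1 (w : R -> R) (Hw : C1_1d w) : C1_2d (fun q => w (fst q) * w (snd q)).
Proof.
  intros p. split; [|split; [|split]].
  - simpl. apply (ex_derive_ext (fun x => w (snd p) * w x)). intros; apply Rmult_comm.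
    apply ex_derive_scal. apply Hw.
  - simpl. apply ex_derive_scal. apply Hw.
  - replace (dx (fun q => w (fst q) * w (snd q))) with (fun q : R * R => Derive w (fst q) * w (snd q)).
    apply cont_prod2. apply C1_dcont; auto. apply C1_cont; auto.
    apply functional_extensionality; intros q; rewrite dx_prod; auto.
  - replace (dy (fun q => w (fst q) * w (snd q))) with (fun q : R * R => w (fst q) * Derive w (snd q)).
    apply cont_prod2. apply C1_cont; auto. apply C1_dcont; auto.
    apply functional_extensionality; intros q; rewrite dy_prod; auto.
Qed.

Lemma sq_pos x : x <> 0 -> 0 < x ^ 2.
Proof. intros H. replace (x ^ 2) with (x * x) by ring. apply (Rsqr_pos_lt x H). Qed.

Lemma lub_const_set (S : R -> Prop) (v : R) : (forall q, S q <-> q = v) -> Lub_Rbar S = Finite v.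
Proof.
  intros H. apply is_lub_Rbar_unique. split.
  - intros q Hq. apply H in Hq. subst. simpl. lra.
  - intros b Hb. apply Hb. apply H. auto.
Qed.

Lemma lub_single {X : Type} (a m : (X -> R) -> R) (f : nat -> X -> R) :
  (forall c, a (fun x => 0 + c * f 0%nat x) = c ^ 2 * a (f 0%nat)) ->
  (forall c, m (fun x => 0 + c * f 0%nat x) = c ^ 2 * m (f 0%nat)) ->
  0 < m (f 0%nat) ->
  Lub_Rbar (fun q => exists c, nonzero_coeffs 1 c /\ q = a (lincomb 1 c f) / m (lincomb 1 c f))
  = Finite (a (f 0%nat) / m (f 0%nat)).
Proof.
  intros Ha Hm Hpos. apply lub_const_set. intros q. split.
  - intros [c [[i [Hi Hc]] Hq]]. assert (i = 0%nat) by lia. subst i.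
    change (lincomb 1 c f) with (fun x => 0 + c 0%nat * f 0%nat x) in Hq.
    rewrite Ha, Hm in Hq. rewrite Hq. field. split; [lra|].
    assert (0 < c 0%nat ^ 2) by (apply sq_pos; auto). lra.
  - intros ->. exists (fun _ => 1). split. exists 0%nat. split; [lia|lra].
    change (lincomb 1 (fun _ => 1) f) with (fun x => 0 + 1 * f 0%nat x).
    rewrite Ha, Hm. field. lra.
Qed.

Lemma zero_plus_fun {X : Type} (c : R) (u : X -> R) : (fun x => 0 + c * u x) = (fun x => c * u x).
Proof. apply functional_extensionality; intros; ring. Qed.

Lemma Qset_char alpha s r :
  (exists f : nat -> R * R -> R,
     (forall i, (i < 1)%nat -> C1_2d (f i)) /\
     (forall c, nonzero_coeffs 1 c -> 0 < mass_Q s (lincomb 1 c f)) /\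
     Finite r = Lub_Rbar (fun q => exists c, nonzero_coeffs 1 c /\
                    q = energy_Q alpha s (lincomb 1 c f) / mass_Q s (lincomb 1 c f)))
  <-> exists u, C1_2d u /\ 0 < mass_Q s u /\ r = energy_Q alpha s u / mass_Q s u.
Proof.
  split.
  - intros [f [Hadm [Hpos Hr]]].
    assert (HM : 0 < mass_Q s (f 0%nat)).
    { specialize (Hpos (fun _ => 1) ltac:(exists 0%nat; split; [lia|lra])).
      change (lincomb 1 (fun _ => 1) f) with (fun x => 0 + 1 * f 0%nat x) in Hpos.
      rewrite zero_plus_fun, mass_Q_scal in Hpos. lra. }
    rewrite lub_single in Hr; auto.
    + exists (f 0%nat). split; [apply Hadm; lia|]. split; auto. injection Hr; auto.
    + intros c. rewrite zero_plus_fun. apply energy_Q_scal.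
    + intros c. rewrite zero_plus_fun. apply mass_Q_scal.
  - intros [u [Hu [HM ->]]]. exists (fun _ => u). split; [intros; auto|]. split.
    + intros c [i [Hi Hc]]. assert (i = 0%nat) by lia. subst i.
      change (lincomb 1 c (fun _ => u)) with (fun x => 0 + c 0%nat * u x).
      rewrite zero_plus_fun, mass_Q_scal. apply Rmult_lt_0_compat; auto.
      apply sq_pos; auto.
    + rewrite lub_single; auto.
      * intros c. rewrite zero_plus_fun. apply energy_Q_scal.
      * intros c. rewrite zero_plus_fun. apply mass_Q_scal.
Qed.

Lemma lamQ_mem alpha s u : C1_2d u -> 0 < mass_Q s u ->
  Rbar_le (robin_eig_square alpha s 1) (energy_Q alpha s u / mass_Q s u).
Proof.
  intros Hu HM. unfold robin_eig_square, minmax. apply glb_le.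
  apply Qset_char. exists u; auto.
Qed.

Lemma lamQ_ge0 alpha s : 0 <= alpha -> 0 <= s -> Rbar_le 0 (robin_eig_square alpha s 1).
Proof.
  intros Ha Hs. unfold robin_eig_square, minmax. apply glb_ge.
  intros r Hr. apply Qset_char in Hr. destruct Hr as [u [Hu [HM ->]]].
  apply Rdiv_le_0_compat; auto. apply energy_Q_ge0; auto.
Qed.


Lemma lamQ_le alpha s t :
  0 < alpha -> 0 < s -> 0 < t -> t * atan t = alpha * s / 2 ->
  Rbar_le (robin_eig_square alpha s 1) (2 * (alpha / t) ^ 2).
Proof.
  intros Ha Hs Ht Hth.
  set (r := alpha / t). set (c := 0 + s / 2). set (th := atan t).
  assert (Hr : 0 < r) by (unfold r; apply Rdiv_lt_0_compat; auto).
  assert (Hthb : 0 < th < PI / 2).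
  { unfold th. split. rewrite <- atan_0. apply atan_increasing; auto.
    destruct (atan_bound t); lra. }
  assert (Hrb : r * (s / 2) = th).
  { unfold r. apply (Rmult_eq_reg_l t); [|lra]. field_simplify; [|lra].
    fold th in Hth. lra. }
  assert (Hcos : forall x, 0 <= x <= s -> 0 < cos (r * (x - c))).
  { intros x Hx. apply (cos_pos_in _ th). lra.
    assert (-(s/2) <= x - c) by (unfold c; lra). assert (x - c <= s/2) by (unfold c; lra).
    split.
    - assert (r * (-(s/2)) <= r * (x - c)) by (apply Rmult_le_compat_l; lra). lra.
    - assert (r * (x - c) <= r * (s/2)) by (apply Rmult_le_compat_l; lra). lra. }
  set (w := fun x => cos (r * (x - c))).
  assert (Hdw : forall x, is_derive w x (- r * sin (r * (x - c)))).
  { intros x. unfold w. auto_derive; auto. replace (x + - c) with (x - c) by ring. ring. }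
  assert (EDw : Derive w = fun x => - r * sin (r * (x - c))).
  { apply functional_extensionality; intros x. apply is_derive_unique. apply Hdw. }
  assert (Hw : C1_1d w).
  { intros x. split. exists (- r * sin (r * (x - c))). apply Hdw.
    rewrite EDw. apply (@ex_derive_continuous R_AbsRing R_NormedModule).
    auto_derive. auto. }
  set (N := RInt (fun x => w x ^ 2) 0 s).
  set (D := RInt (fun x => Derive w x ^ 2) 0 s).
  assert (HN : 0 < N).
  { unfold N. apply RInt_gt_0. auto. intros x Hx. apply sq_pos. specialize (Hcos x ltac:(lra)).
    unfold w. lra. intros x Hx. apply cont_of_pt. apply continuity_pt_mult. apply C1_cont; auto.
    apply continuity_pt_mult. apply C1_cont; auto. apply continuity_pt_const; intros a1 b1; auto. }
  assert (Hid : D + alpha * (w 0 ^ 2 + w s ^ 2) = r ^ 2 * N).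
  { pose proof (interval_ident alpha s t 0 w Ha Hs Ht Hth Hw) as HI.
    replace (0 + s) with s in HI by ring. fold N D r c in HI.
    rewrite (RInt_ext (fun x => (Derive w x - gfun r c x * w x) ^ 2) (fun _ => 0)) in HI.
    - rewrite (@RInt_const R_CompleteNormedModule) in HI. change (scal (s - 0) 0) with ((s - 0) * 0) in HI. lra.
    - intros x Hx. rewrite Rmin_left, Rmax_right in Hx by lra.
      specialize (Hcos x ltac:(lra)). rewrite EDw. unfold gfun, w. toR. field. lra. }
  set (U := fun q : R * R => w (fst q) * w (snd q)).
  assert (HU : C1_2d U) by (apply prod_C1; auto).
  assert (HM : mass_Q s U = N * N) by (apply prod_mass; auto; lra).
  assert (HE : energy_Q alpha s U = 2 * N * (D + alpha * (w 0 ^ 2 + w s ^ 2))) by (apply prod_energy; auto; lra).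
  pose proof (lamQ_mem alpha s U HU ltac:(rewrite HM; nra)) as H.
  rewrite HE, HM, Hid in H.
  replace (2 * N * (r ^ 2 * N) / (N * N)) with (2 * (alpha / t) ^ 2) in H. auto.
  unfold r. field. lra.
Qed.

Lemma C1_2d_zero : C1_2d (fun _ => 0).
Proof.
  intros p. split; [|split; [|split]].
  - apply (@ex_derive_const R_AbsRing R_NormedModule).
  - apply (@ex_derive_const R_AbsRing R_NormedModule).
  - replace (dx (fun _ : R * R => 0)) with (fun _ : R * R => 0).
    apply continuous_const. apply functional_extensionality; intros q. unfold dx.
    symmetry. apply Derive_const.
  - replace (dy (fun _ : R * R => 0)) with (fun _ : R * R => 0).
    apply continuous_const. apply functional_extensionality; intros q. unfold dy.
    symmetry. apply Derive_const.
Qed.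

Lemma lsum_delta2 n j (c : nat -> R) x : (j < n)%nat ->
  lsum n (fun i => c i * (if Nat.eqb j i then x else 0)) = c j * x.
Proof.
  induction n; cbn [lsum]; intros H; [lia|].
  destruct (Nat.eq_dec j n) as [->|Hne].
  - rewrite Nat.eqb_refl. rewrite (lsum_ext _ _ (fun _ => 0)). rewrite lsum_zero. ring.
    intros i Hi. destruct (Nat.eqb_spec n i); [lia|ring].
  - rewrite IHn by lia. destruct (Nat.eqb_spec j n); [lia|ring].
Qed.

Lemma rbar_finite_between (x : Rbar) (a b : R) : Rbar_le a x -> Rbar_le x b -> x = Finite (real x).
Proof. destruct x; simpl; tauto. Qed.

Lemma lamS_le alpha A k :
  (1 <= k)%nat ->
  Rbar_le (robin_eig_squares alpha A k k) (robin_eig_square alpha (sqrt (A / INR k)) 1).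
Proof.
  intros Hk. set (s := sqrt (A / INR k)).
  unfold robin_eig_square, minmax.
  destruct (Glb_Rbar_correct (fun r => exists f : nat -> R * R -> R,
     (forall i, (i < 1)%nat -> C1_2d (f i)) /\
     (forall c, nonzero_coeffs 1 c -> 0 < mass_Q s (lincomb 1 c f)) /\
     Finite r = Lub_Rbar (fun q => exists c, nonzero_coeffs 1 c /\
                    q = energy_Q alpha s (lincomb 1 c f) / mass_Q s (lincomb 1 c f)))) as [_ HG].
  apply HG. intros r Hr. apply Qset_char in Hr. destruct Hr as [u [Hu [HM ->]]].
  unfold robin_eig_squares, minmax. apply glb_le.
  set (F := fun (i : nat) (jp : nat * (R * R)) => if Nat.eqb (fst jp) i then u (snd jp) else 0).
  assert (Hcomp : forall c j, (j < k)%nat -> (fun p => lincomb k c F (j, p)) = (fun p => c j * u p)).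
  { intros c j Hj. apply functional_extensionality; intros p. unfold lincomb, F. simpl.
    apply lsum_delta2; auto. }
  assert (Senergy : forall c, energy_S alpha A k (lincomb k c F) = lsum k (fun i => c i ^ 2) * energy_Q alpha s u).
  { intros c. unfold energy_S. fold s. rewrite (lsum_ext _ _ (fun j => energy_Q alpha s u * c j ^ 2)).
    rewrite lsum_scal. ring. intros j Hj. rewrite (Hcomp c j Hj). rewrite energy_Q_scal. ring. }
  assert (Smass : forall c, mass_S A k (lincomb k c F) = lsum k (fun i => c i ^ 2) * mass_Q s u).
  { intros c. unfold mass_S. fold s. rewrite (lsum_ext _ _ (fun j => mass_Q s u * c j ^ 2)).
    rewrite lsum_scal. ring. intros j Hj. rewrite (Hcomp c j Hj). rewrite mass_Q_scal. ring. }
  exists F. split; [|split].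
  - intros i Hi j Hj. unfold F. simpl. destruct (Nat.eqb j i). auto. apply C1_2d_zero.
  - intros c Hc. rewrite (Smass c). apply Rmult_lt_0_compat; auto. apply lsum_sq_pos; auto.
  - symmetry. apply lub_const_set. intros q. split.
    + intros [c [Hc ->]]. rewrite (Senergy c), (Smass c).
      assert (0 < lsum k (fun i => c i ^ 2)) by (apply lsum_sq_pos; auto). field. lra.
    + intros ->. exists (fun i => if Nat.eqb i 0 then 1 else 0). split.
      exists 0%nat. split; [lia|simpl; lra].
      rewrite Senergy, Smass.
      assert (0 < lsum k (fun i => (if Nat.eqb i 0 then 1 else 0) ^ 2)).
      { apply lsum_sq_pos. exists 0%nat. split; [lia|simpl; lra]. }
      field. lra.
Qed.

Lemma lamS_ge alpha A k B :
  0 <= alpha -> (1 <= k)%nat ->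
  Rbar_le (robin_eig_square alpha (sqrt (A / INR k)) 1) (Finite B) ->
  Rbar_le (robin_eig_square alpha (sqrt (A / INR k)) 1) (robin_eig_squares alpha A k k).
Proof.
  intros Ha Hk HB. set (s := sqrt (A / INR k)). fold s in HB.
  assert (Hs : 0 <= s) by apply sqrt_pos.
  pose proof (lamQ_ge0 alpha s Ha Hs) as H0.
  destruct (robin_eig_square alpha s 1) as [l| |] eqn:EQ; simpl in H0, HB; try tauto.
  assert (Hl0 : 0 <= l) by exact H0.
  unfold robin_eig_squares, minmax. apply glb_ge. intros r [F [Hadm [Hpos Hr]]].
  set (e0 := fun i : nat => if Nat.eqb i 0 then 1 else 0).
  assert (Hnz : nonzero_coeffs k e0) by (exists 0%nat; split; [lia|unfold e0; simpl; lra]).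
  set (v := lincomb k e0 F).
  assert (Hcomp : forall j, (fun p => v (j, p)) = (fun p => F 0%nat (j, p))).
  { intros j. apply functional_extensionality; intros p. unfold v, lincomb, e0.
    apply (lsum_delta k 0 (fun i => F i (j, p))). lia. }
  assert (HMS : 0 < mass_S A k v) by (apply Hpos; auto).
  assert (Hq : Rbar_le (energy_S alpha A k v / mass_S A k v) r).
  { rewrite Hr. apply lub_ge. exists e0. split; auto. }
  simpl in Hq.
  assert (Hkey : forall j, (j < k)%nat ->
    l * mass_Q s (fun p => F 0%nat (j, p)) <= energy_Q alpha s (fun p => F 0%nat (j, p))).
  { intros j Hj.
    destruct (Rlt_le_dec 0 (mass_Q s (fun p => F 0%nat (j, p)))) as [HM|HM].
    - assert (Hu : C1_2d (fun p => F 0%nat (j, p))) by (apply Hadm; lia).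
      pose proof (lamQ_mem alpha s _ Hu HM) as Hm. rewrite EQ in Hm. simpl in Hm.
      apply (Rmult_le_reg_r (/ mass_Q s (fun p => F 0%nat (j, p)))).
      apply Rinv_0_lt_compat; auto.
      replace (l * mass_Q s (fun p => F 0%nat (j, p)) * / mass_Q s (fun p => F 0%nat (j, p))) with l
        by (field; lra). auto.
    - assert (0 <= energy_Q alpha s (fun p => F 0%nat (j, p))) by (apply energy_Q_ge0; auto).
      assert (0 <= l * (- mass_Q s (fun p => F 0%nat (j, p)))) by (apply Rmult_le_pos; lra).
      lra. }
  assert (HES : energy_S alpha A k v = lsum k (fun j => energy_Q alpha s (fun p => F 0%nat (j, p)))).
  { unfold energy_S. fold s. apply lsum_ext. intros j _. rewrite Hcomp. auto. }
  assert (HMS' : mass_S A k v = lsum k (fun j => mass_Q s (fun p => F 0%nat (j, p)))).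
  { unfold mass_S. fold s. apply lsum_ext. intros j _. rewrite Hcomp. auto. }
  assert (Hsum : l * mass_S A k v <= energy_S alpha A k v).
  { rewrite HES, HMS', <- lsum_scal. apply lsum_le. auto. }
  simpl. assert (l <= energy_S alpha A k v / mass_S A k v).
  { apply (Rmult_le_reg_r (mass_S A k v)); auto.
    replace (energy_S alpha A k v / mass_S A k v * mass_S A k v) with (energy_S alpha A k v) by (field; lra).
    lra. }
  lra.
Qed.

Lemma mono_deriv (f df : R -> R) a b :
  a <= b -> (forall x, a <= x <= b -> is_derive f x (df x)) ->
  (forall x, a <= x <= b -> 0 <= df x) -> f a <= f b.
Proof.
  intros Hab Hd Hp.
  destruct (MVT_gen f a b df) as [c [Hc E]].
  - intros x Hx. rewrite Rmin_left, Rmax_right in Hx by auto. apply Hd; lra.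
  - intros x Hx. rewrite Rmin_left, Rmax_right in Hx by auto.
    apply continuity_pt_filterlim. apply (@ex_derive_continuous R_AbsRing R_NormedModule).
    exists (df x). apply Hd; auto.
  - rewrite Rmin_left, Rmax_right in Hc by auto.
    assert (0 <= df c * (b - a)) by (apply Rmult_le_pos; [apply Hp; auto|lra]). lra.
Qed.

Lemma atan_pos t : 0 < t -> 0 < atan t.
Proof. intros H. rewrite <- atan_0. apply atan_increasing; auto. Qed.

Lemma atan_lower t : 0 <= t -> t / (1 + t ^ 2) <= atan t.
Proof.
  intros Ht.
  assert (H := mono_deriv (fun x => atan x - x / (1 + x ^ 2)) (fun x => 2 * x ^ 2 / (1 + x ^ 2) ^ 2) 0 t Ht).
  cbv beta in H. rewrite atan_0 in H.
  assert (0 <= atan t - t / (1 + t ^ 2)).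
  { replace 0 with (0 - 0 / (1 + 0 ^ 2)) at 1 by field. apply H.
    - intros x _. assert (0 <= x * x) by apply Rle_0_sqr. auto_derive.
      + lra.
      + field. lra.
    - intros x _. apply Rdiv_le_0_compat. assert (0 <= x ^ 2) by apply pow2_ge_0. lra.
      assert (0 <= x ^ 2) by apply pow2_ge_0. apply pow_lt. lra. }
  lra.
Qed.

Lemma t_over_atan_mono a b : 0 < a <= b -> a / atan a <= b / atan b.
Proof.
  intros [Ha Hab].
  apply (mono_deriv (fun x => x / atan x) (fun x => (atan x - x / (1 + x ^ 2)) / (atan x) ^ 2) a b Hab).
  - intros x Hx. assert (0 < atan x) by (apply atan_pos; lra).
    assert (0 <= x * x) by apply Rle_0_sqr. auto_derive. intro; lra. field. split; intro; nra.
  - intros x Hx. assert (0 < atan x) by (apply atan_pos; lra).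
    apply Rdiv_le_0_compat. assert (HL := atan_lower x ltac:(lra)). lra. apply pow_lt. auto.
Qed.

Definition Phi (t : R) := t ^ 2 + t ^ 3 / ((1 + t ^ 2) * atan t).

Lemma Phi_mono a b : 0 < a <= b -> Phi a <= Phi b.
Proof.
  intros [Ha Hab]. unfold Phi.
  assert (H1 := t_over_atan_mono a b ltac:(lra)).
  assert (Hpa := atan_pos a Ha). assert (Hpb := atan_pos b ltac:(lra)).
  assert (E : forall t, 0 < t -> t ^ 3 / ((1 + t ^ 2) * atan t) = (t ^ 2 / (1 + t ^ 2)) * (t / atan t)).
  { intros t Ht. assert (0 < atan t) by (apply atan_pos; auto). field.
    split. lra. assert (0 <= t ^ 2) by apply pow2_ge_0. lra. }
  rewrite !E by lra.
  assert (Hsq : a ^ 2 <= b ^ 2) by (apply pow_incr; lra).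
  assert (H2 : a ^ 2 / (1 + a ^ 2) <= b ^ 2 / (1 + b ^ 2)).
  { assert (0 <= a ^ 2) by apply pow2_ge_0.
    apply (Rmult_le_reg_r ((1 + a ^ 2) * (1 + b ^ 2))). nra.
    replace (a ^ 2 / (1 + a ^ 2) * ((1 + a ^ 2) * (1 + b ^ 2))) with (a ^ 2 * (1 + b ^ 2)) by (field; lra).
    replace (b ^ 2 / (1 + b ^ 2) * ((1 + a ^ 2) * (1 + b ^ 2))) with (b ^ 2 * (1 + a ^ 2)) by (field; lra).
    nra. }
  assert (0 <= a ^ 2 / (1 + a ^ 2)).
  { apply Rdiv_le_0_compat. apply pow2_ge_0. assert (0 <= a ^ 2) by apply pow2_ge_0. lra. }
  assert (0 <= a / atan a) by (apply Rdiv_le_0_compat; lra).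
  assert (a ^ 2 / (1 + a ^ 2) * (a / atan a) <= b ^ 2 / (1 + b ^ 2) * (b / atan b)).
  { apply Rmult_le_compat; auto. }
  lra.
Qed.

Definition Hf (y : R) := ln (atan (/ sqrt y)) - ln y / 2.
Definition dH (y : R) := - Phi (/ sqrt y) / 2.

Lemma Phi_pos t : 0 < t -> 0 < Phi t.
Proof.
  intros Ht. unfold Phi. assert (0 < atan t) by (apply atan_pos; auto).
  assert (0 < t ^ 2) by (apply pow_lt; auto). assert (0 < t ^ 3) by (apply pow_lt; auto).
  assert (0 < t ^ 3 / ((1 + t ^ 2) * atan t)).
  { apply Rdiv_lt_0_compat; auto. apply Rmult_lt_0_compat; lra. }
  lra.
Qed.

Lemma Hf_deriv y : 0 < y -> is_derive Hf y (dH y).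
Proof.
  intros Hy. unfold Hf, dH, Phi.
  assert (Hr : 0 < sqrt y) by (apply sqrt_lt_R0; auto).
  assert (Hrr : sqrt y * sqrt y = y) by (apply sqrt_sqrt; lra).
  assert (Ha : 0 < atan (/ sqrt y)) by (apply atan_pos; apply Rinv_0_lt_compat; auto).
  auto_derive.
  - repeat split; auto; try lra.
  - set (r := sqrt y) in *. set (A := atan (/ r)) in *. rewrite <- Hrr.
    field. repeat split; try lra. 
    all: try (assert (0 < r * r) by nra; nra).
Qed.

Lemma dH_mono c1 c2 : 0 < c1 <= c2 -> dH c1 <= dH c2.
Proof.
  intros [H1 H12]. unfold dH.
  assert (0 < sqrt c1) by (apply sqrt_lt_R0; auto).
  assert (sqrt c1 <= sqrt c2) by (apply sqrt_le_1_alt; auto).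
  assert (0 < / sqrt c2) by (apply Rinv_0_lt_compat; lra).
  assert (/ sqrt c2 <= / sqrt c1) by (apply Rinv_le_contravar; auto).
  assert (Phi (/ sqrt c2) <= Phi (/ sqrt c1)) by (apply Phi_mono; lra).
  lra.
Qed.

Lemma dH_neg y : 0 < y -> dH y < 0.
Proof.
  intros Hy. unfold dH. assert (0 < sqrt y) by (apply sqrt_lt_R0; auto).
  assert (0 < Phi (/ sqrt y)) by (apply Phi_pos; apply Rinv_0_lt_compat; auto). lra.
Qed.

Lemma MVT_H a b : 0 < a <= b -> exists c, a <= c <= b /\ Hf b - Hf a = dH c * (b - a).
Proof.
  intros [Ha Hab].
  destruct (MVT_gen Hf a b dH) as [c [Hc E]].
  - intros x Hx. rewrite Rmin_left, Rmax_right in Hx by auto. apply Hf_deriv; lra.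
  - intros x Hx. rewrite Rmin_left, Rmax_right in Hx by auto.
    apply continuity_pt_filterlim. apply (@ex_derive_continuous R_AbsRing R_NormedModule).
    exists (dH x). apply Hf_deriv; lra.
  - rewrite Rmin_left, Rmax_right in Hc by auto. exists c; auto.
Qed.

Lemma Hf_convex y1 y2 : 0 < y1 <= y2 -> 2 * Hf ((y1 + y2) / 2) <= Hf y1 + Hf y2.
Proof.
  intros [H1 H12]. set (m := (y1 + y2) / 2).
  destruct (MVT_H y1 m ltac:(unfold m; lra)) as [c1 [Hc1 E1]].
  destruct (MVT_H m y2 ltac:(unfold m; lra)) as [c2 [Hc2 E2]].
  assert (dH c1 <= dH c2) by (apply dH_mono; lra).
  assert (m - y1 = y2 - m) by (unfold m; lra).
  assert (0 <= m - y1) by (unfold m; lra).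
  assert (dH c1 * (m - y1) <= dH c2 * (y2 - m)).
  { rewrite <- H0. apply Rmult_le_compat_r; auto. }
  lra.
Qed.

Lemma Hf_decr a b : 0 < a < b -> Hf b < Hf a.
Proof.
  intros [Ha Hab]. destruct (MVT_H a b ltac:(lra)) as [c [Hc E]].
  assert (dH c < 0) by (apply dH_neg; lra).
  assert (dH c * (b - a) < 0) by (apply Rmult_neg_pos; lra). lra.
Qed.

Lemma Hf_at t : 0 < t -> Hf (/ t ^ 2) = ln (t * atan t).
Proof.
  intros Ht. unfold Hf.
  assert (0 < t ^ 2) by (apply pow_lt; auto).
  assert (E : sqrt (/ t ^ 2) = / t).
  { rewrite sqrt_inv. f_equal. apply sqrt_pow2. lra. }
  rewrite E, Rinv_inv. rewrite ln_Rinv by auto. rewrite ln_mult by (auto; apply atan_pos; auto).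
  replace (t ^ 2) with (t * t) by ring. rewrite ln_mult by auto. field.
Qed.

Lemma key_ineq tp tq ts :
  0 < tp -> 0 < tq -> 0 < ts ->
  (tp * atan tp) * (tq * atan tq) = (ts * atan ts) ^ 2 ->
  2 / ts ^ 2 <= / tp ^ 2 + / tq ^ 2.
Proof.
  intros Hp Hq Hs HK.
  assert (Kp : 0 < tp * atan tp) by (apply Rmult_lt_0_compat; auto; apply atan_pos; auto).
  assert (Kq : 0 < tq * atan tq) by (apply Rmult_lt_0_compat; auto; apply atan_pos; auto).
  assert (Ks : 0 < ts * atan ts) by (apply Rmult_lt_0_compat; auto; apply atan_pos; auto).
  assert (yp : 0 < / tp ^ 2) by (apply Rinv_0_lt_compat; apply pow_lt; auto).
  assert (yq : 0 < / tq ^ 2) by (apply Rinv_0_lt_compat; apply pow_lt; auto).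
  assert (ys : 0 < / ts ^ 2) by (apply Rinv_0_lt_compat; apply pow_lt; auto).
  assert (Hsum : Hf (/ tp ^ 2) + Hf (/ tq ^ 2) = 2 * Hf (/ ts ^ 2)).
  { rewrite !Hf_at by auto. rewrite <- ln_mult by auto. rewrite HK.
    replace ((ts * atan ts) ^ 2) with ((ts * atan ts) * (ts * atan ts)) by ring.
    rewrite ln_mult by auto. ring. }
  assert (Hc : 2 * Hf ((/ tp ^ 2 + / tq ^ 2) / 2) <= Hf (/ tp ^ 2) + Hf (/ tq ^ 2)).
  { destruct (Rle_lt_dec (/ tp ^ 2) (/ tq ^ 2)).
    - apply Hf_convex; lra.
    - replace (/ tp ^ 2 + / tq ^ 2) with (/ tq ^ 2 + / tp ^ 2) by ring.
      assert (H' := Hf_convex (/ tq ^ 2) (/ tp ^ 2) ltac:(lra)). lra. }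
  destruct (Rle_lt_dec (/ ts ^ 2) ((/ tp ^ 2 + / tq ^ 2) / 2)) as [Hle|Hlt].
  - unfold Rdiv. lra.
  - assert (Hf (/ ts ^ 2) < Hf ((/ tp ^ 2 + / tq ^ 2) / 2)) by (apply Hf_decr; lra).
    lra.
Qed.

Theorem lemma7p1 (alpha A : R) (k : nat) (a : R) :
  0 < alpha -> 0 < A -> (2 <= k)%nat -> 1 <= a ->
  Rbar_le (robin_eig_square alpha (sqrt (A / INR k)) 1)
          (Rbar_plus (robin_eig_interval alpha (sqrt A * a) k)
                     (robin_eig_interval alpha (sqrt A / a) 1))
  /\ robin_eig_square alpha (sqrt (A / INR k)) 1 = robin_eig_squares alpha A k k.
Proof.
  intros Ha HA Hk Ha1.
  assert (HkR : 0 < INR k) by (apply lt_0_INR; lia).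
  assert (HsA : 0 < sqrt A) by (apply sqrt_lt_R0; auto).
  set (L := sqrt A * a). set (M := sqrt A / a). set (p := L / INR k). set (s := sqrt (A / INR k)).
  assert (HL : 0 < L) by (unfold L; apply Rmult_lt_0_compat; lra).
  assert (HM : 0 < M) by (unfold M; apply Rdiv_lt_0_compat; lra).
  assert (Hp : 0 < p) by (unfold p; apply Rdiv_lt_0_compat; lra).
  assert (HAk : 0 < A / INR k) by (apply Rdiv_lt_0_compat; auto).
  assert (Hs : 0 < s) by (unfold s; apply sqrt_lt_R0; auto).
  destruct (t_exists (alpha * p / 2)) as [tp [Htp Ep]]. apply Rdiv_lt_0_compat; [apply Rmult_lt_0_compat|]; lra.
  destruct (t_exists (alpha * M / 2)) as [tq [Htq Eq]]. apply Rdiv_lt_0_compat; [apply Rmult_lt_0_compat|]; lra.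
  destruct (t_exists (alpha * s / 2)) as [ts [Hts Es]]. apply Rdiv_lt_0_compat; [apply Rmult_lt_0_compat|]; lra.
  assert (B1 : Rbar_le (Finite ((alpha / tp) ^ 2)) (robin_eig_interval alpha L k)).
  { apply (eig_interval_lower alpha L k p tp); auto. lia. unfold p. field. lra. }
  assert (B2 : Rbar_le (Finite ((alpha / tq) ^ 2)) (robin_eig_interval alpha M 1)).
  { apply (eig_interval_lower alpha M 1 M tq); auto. simpl. ring. }
  assert (B3 : Rbar_le (robin_eig_square alpha s 1) (Finite (2 * (alpha / ts) ^ 2))).
  { apply lamQ_le; auto. }
  assert (Hpq : p * M = s ^ 2).
  { unfold p, L, M, s. rewrite <- Rsqr_pow2, Rsqr_sqrt by lra.
    replace (sqrt A * a / INR k * (sqrt A / a)) with ((sqrt A * sqrt A) / INR k) by (field; lra).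
    rewrite sqrt_sqrt by lra. auto. }
  assert (HK : (tp * atan tp) * (tq * atan tq) = (ts * atan ts) ^ 2).
  { rewrite Ep, Eq, Es. replace ((alpha * s / 2) ^ 2) with (alpha ^ 2 / 4 * s ^ 2) by field.
    rewrite <- Hpq. field. }
  pose proof (key_ineq tp tq ts Htp Htq Hts HK) as Hkey.
  assert (Hfin : 2 * (alpha / ts) ^ 2 <= (alpha / tp) ^ 2 + (alpha / tq) ^ 2).
  { replace (2 * (alpha / ts) ^ 2) with (alpha ^ 2 * (2 / ts ^ 2)) by (field; lra).
    replace ((alpha / tp) ^ 2 + (alpha / tq) ^ 2) with (alpha ^ 2 * (/ tp ^ 2 + / tq ^ 2)) by (field; lra).
    apply Rmult_le_compat_l; auto. apply pow2_ge_0. }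
  split.
  - apply (Rbar_le_trans _ (Finite (2 * (alpha / ts) ^ 2))); auto.
    apply (Rbar_le_trans _ (Rbar_plus (Finite ((alpha / tp) ^ 2)) (Finite ((alpha / tq) ^ 2)))).
    simpl. auto.
    apply Rbar_plus_le_compat; auto.
  - apply Rbar_le_antisym.
    + apply (lamS_ge alpha A k (2 * (alpha / ts) ^ 2)). lra. lia. auto.
    + apply lamS_le. lia.
Qed.
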